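(* Let $\varphi$ be a hexagonal grid. For a triangle $\mathcal{T}_i$ of the grid, listed as $(\varphi(\{p,q\}),\varphi(\{q,s\}),\varphi(\{s,p\}))$ with $p,q,s$ counterclockwise, let $a_i,b_i,c_i$ be its side lengths and $S_i$ twice its signed area (positive if the listed vertices are counterclockwise). Then the quantity $$a_i^2+b_i^2+c_i^2-2\sqrt3\,S_i$$ takes the same value for all triangles $\mathcal{T}_i$ of the grid.
   Context: Let $\zeta=e^{i\pi/3}$ and $\Lambda=\{m+n\zeta: m,n\in\mathbb{Z}\}$. Call $p,q\in\Lambda$ adjacent if $|p-q|=1$, and let $\mathcal{E}$ be the set of unordered pairs $\{p,q\}$ of adjacent lattice points. A hexagonal grid is a map $\varphi:\mathcal{E}\to\mathbb{C}$ such that for every $p\in\Lambda$ there exist $c_p,r_p\in\mathbb{C}$ with $\varphi(\{p,p+\zeta^k\})=c_p+r_p\zeta^k$ for $k=0,\dots,5$. Thus the six points form a regular, possibly degenerate, hexagon $H_p$ listed counterclockwise. For each set $\{p,q,s\}\subset\Lambda$ of three pairwise adjacent lattice points listed counterclockwise, the corresponding triangle of the grid is $(\varphi(\{p,q\}),\varphi(\{q,s\}),\varphi(\{s,p\}))$. The reference triangle of $\varphi$ is $(\varphi(\{0,1\}),\varphi(\{1,\zeta\}),\varphi(\{\zeta,0\}))$. *)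

(* Defs.v *)
From HB Require Import structures.
From mathcomp Require Import all_boot all_order all_algebra.
From mathcomp Require Import complex.
Set Implicit Arguments. Unset Strict Implicit. Unset Printing Implicit Defensive.
Import Order.TTheory GRing.Theory Num.Theory.
Local Open Scope ring_scope.
Local Open Scope complex_scope.

Section HexGrid.
Variable R : rcfType.

(* zeta = e^{i pi/3} = 1/2 + i sqrt 3 / 2 *)
Definition zeta : R[i] := (2%:R^-1) +i* (Num.sqrt 3%:R / 2%:R).

(* The lattice Lambda = { m + n zeta } is indexed by pairs (m, n) of integers. *)
Definition lat := (int * int)%type.
Definition emb (p : lat) : R[i] := (p.1)%:~R + (p.2)%:~R * zeta.

Definition cdist (z w : R[i]) : R :=
  let d := (z - w)%R in
  Num.sqrt ((@complex.Re R d) ^+ 2 + (@complex.Im R d) ^+ 2).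

Definition area2 (a b c : R[i]) : R :=
  let u := (b - a)%R in let v := (c - a)%R in
  @complex.Re R u * @complex.Im R v - @complex.Im R u * @complex.Re R v.

Definition adjacent (p q : lat) : Prop := cdist (emb p) (emb q) = 1.

(* lattice coordinates of zeta^k: p + zeta^k is the lattice point p + dir k *)
Definition dir (k : nat) : lat :=
  match (k %% 6)%N with
  | 0 => (1, 0) | 1 => (0, 1) | 2 => (-1, 1)
  | 3 => (-1, 0) | 4 => (0, -1) | _ => (1, -1)
  end%R.
Definition lat_add (p q : lat) : lat := (p.1 + q.1, p.2 + q.2).

(* A hexagonal grid: a map on unordered adjacent pairs, represented by a function
   on ordered pairs that is symmetric on adjacent pairs, such that around every
   lattice point the six values form a regular (possibly degenerate) hexagon. *)
Definition hex_grid (phi : lat -> lat -> R[i]) : Prop :=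
  (forall p q, adjacent p q -> phi p q = phi q p) /\
  (forall p, exists c r : R[i], forall k : 'I_6,
      phi p (lat_add p (dir k)) = c + r * zeta ^+ k).

Definition grid_triangle (p q s : lat) : Prop :=
  [/\ adjacent p q, adjacent q s, adjacent s p & 0 < area2 (emb p) (emb q) (emb s)].

Definition tri_quantity (phi : lat -> lat -> R[i]) (p q s : lat) : R :=
  let A := phi p q in let B := phi q s in let Cc := phi s p in
  cdist A B ^+ 2 + cdist B Cc ^+ 2 + cdist Cc A ^+ 2
  - 2%:R * Num.sqrt 3%:R * area2 A B Cc.

End HexGrid.

(* Main.v *)
Require Import Defs.
From HB Require Import structures.
From mathcomp Require Import all_boot all_order all_algebra.
From mathcomp Require Import complex ring lra zify.
Import Order.TTheory GRing.Theory Num.Theory.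
Local Open Scope ring_scope.

Section S.
Variable R : rcfType.
Local Notation t := (Num.sqrt (3%:R : R)).
Local Notation RE := (@complex.Re R).
Local Notation IM := (@complex.Im R).
Local Notation z := (zeta R).
Local Notation C := (R[i]).

Lemma Ht : t ^+ 2 = 3%:R.
Proof. by rewrite sqr_sqrtr // ler0n. Qed.
Lemma t_gt0 : 0 < t.
Proof. by rewrite sqrtr_gt0 ltr0n. Qed.

Lemma ReM (x y : C) : RE (x * y) = RE x * RE y - IM x * IM y.
Proof. by case: x => a b; case: y => c d. Qed.
Lemma ImM (x y : C) : IM (x * y) = RE x * IM y + IM x * RE y.
Proof. by case: x => a b; case: y => c d. Qed.
Lemma ReD (x y : C) : RE (x + y) = RE x + RE y.
Proof. by case: x => a b; case: y => c d. Qed.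
Lemma ImD (x y : C) : IM (x + y) = IM x + IM y.
Proof. by case: x => a b; case: y => c d. Qed.
Lemma ReN (x : C) : RE (- x) = - RE x.
Proof. by case: x => a b. Qed.
Lemma ImN (x : C) : IM (- x) = - IM x.
Proof. by case: x => a b. Qed.
Lemma ReB (x y : C) : RE (x - y) = RE x - RE y.
Proof. by case: x => a b; case: y => c d. Qed.
Lemma ImB (x y : C) : IM (x - y) = IM x - IM y.
Proof. by case: x => a b; case: y => c d. Qed.
Lemma Re1 : RE (1 : C) = 1. Proof. by []. Qed.
Lemma Im1 : IM (1 : C) = 0. Proof. by []. Qed.
Lemma Rez : RE z = 2%:R^-1. Proof. by []. Qed.
Lemma Imz : IM z = t / 2%:R. Proof. by []. Qed.
Lemma cext (x y : C) : RE x = RE y -> IM x = IM y -> x = y.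
Proof. by case: x => a b; case: y => c d /= -> ->. Qed.

Lemma Re_int (m : int) : RE (m%:~R) = m%:~R.
Proof. by rewrite (raddfMz (@complex.Re R)). Qed.
Lemma Im_int (m : int) : IM (m%:~R) = 0.
Proof. by rewrite (raddfMz (@complex.Im R)) /= mul0rz. Qed.

Lemma z2 : z ^+ 2 = z - 1.
Proof.
by apply: cext; rewrite expr2 ?ReM ?ImM ?ReD ?ImD ?ReN ?ImN /= ; by field: Ht.
Qed.
Lemma z3 : z ^+ 3 = -1.
Proof. rewrite exprS z2; ring: z2. Qed.
Lemma z6 : z ^+ 6 = 1.
Proof. by rewrite (_ : 6 = 3 * 2)%N // exprM z3 expr2 mulrNN mulr1. Qed.
Lemma zmod k : z ^+ k = z ^+ (k %% 6).
Proof. by rewrite {1}(divn_eq k 6) exprD mulnC exprM z6 expr1n mul1r. Qed.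

Lemma emb_re (p : lat) : RE (emb R p) = p.1%:~R + p.2%:~R / 2%:R.
Proof. by rewrite /emb ReD ReM !Re_int Im_int Rez mul0r subr0. Qed.
Lemma emb_im (p : lat) : IM (emb R p) = p.2%:~R * t / 2%:R.
Proof. by rewrite /emb ImD ImM !Im_int Re_int Imz add0r mul0r addr0 mulrA. Qed.

Lemma emb_inj (p q : lat) : emb R p = emb R q -> p = q.
Proof.
move=> H.
have H2 : p.2 = q.2.
  have := congr1 (@complex.Im R) H; rewrite !emb_im => E.
  have E' : (p.2%:~R : R) = q.2%:~R.
    have tn : t / 2%:R != 0 by rewrite mulf_neq0 ?invr_eq0 ?pnatr_eq0 // gt_eqF // t_gt0.
    by apply: (mulIf tn); rewrite !mulrA.
  by apply/eqP; rewrite -(eqr_int R) E'.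
have H1 : p.1 = q.1.
  have := congr1 (@complex.Re R) H; rewrite !emb_re H2 => /addIr E.
  by apply/eqP; rewrite -(eqr_int R) E.
by case: p q H1 H2 {H} => [a b] [c d] /= -> ->.
Qed.

Lemma embD (p q : lat) : emb R (lat_add p q) = emb R p + emb R q.
Proof. rewrite /emb /lat_add /= !rmorphD /=; ring. Qed.

Lemma dirmod k : dir k = dir (k %% 6).
Proof. by rewrite /dir modn_mod. Qed.

Lemma emb_dir k : emb R (dir k) = z ^+ k.
Proof.
rewrite dirmod zmod; have : (k %% 6 < 6)%N by rewrite ltn_pmod.
case: (k %% 6)%N => [|[|[|[|[|[|m]]]]]] // _; rewrite /emb /= ?rmorphN ?rmorph1 ?rmorph0;
  ring: (z2 ).
Qed.

Definition P k p := lat_add p (dir k).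
Lemma embP k p : emb R (P k p) = emb R p + z ^+ k.
Proof. by rewrite /P embD emb_dir. Qed.

Ltac latsolve := apply: emb_inj; rewrite ?embP; do ?rewrite exprS; do ?rewrite exprD; do ?rewrite exprS; ring: (z2).

Lemma L2 k p : P (k + 2) (P k p) = P k.+1 p.
Proof. latsolve. Qed.
Lemma L3' k p : P (k + 2).+1 (P k p) = p.
Proof. latsolve. Qed.
Lemma L5 k p : P (k + 5) (P k.+1 p) = P k p.
Proof. latsolve. Qed.
Lemma L4 k p : P (k + 4) (P k.+1 p) = p.
Proof. latsolve. Qed.
Lemma L3 k p : P (k + 3) (P k.+1 p) = P k.+2 p.
Proof. latsolve. Qed.

Definition normsq (x : C) := RE x ^+ 2 + IM x ^+ 2.
Lemma normsq_ge0 x : 0 <= normsq x.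
Proof. by rewrite /normsq addr_ge0 // sqr_ge0. Qed.
Lemma normsqM x y : normsq (x * y) = normsq x * normsq y.
Proof. rewrite /normsq ReM ImM; ring. Qed.
Lemma normsqN x : normsq (- x) = normsq x.
Proof. rewrite /normsq ReN ImN; ring. Qed.
Lemma normsq_zX k : normsq (z ^+ k) = 1.
Proof.
elim: k => [|k IH]; first by rewrite /normsq expr0 Re1 Im1; ring.
rewrite exprS normsqM IH mulr1 /normsq Rez Imz; by field: Ht.
Qed.

Lemma cdist2 a b : cdist a b ^+ 2 = normsq (a - b).
Proof. by rewrite /cdist sqr_sqrtr // normsq_ge0. Qed.

Lemma Qform A B Cc : cdist A B ^+ 2 + cdist B Cc ^+ 2 + cdist Cc A ^+ 2
  - 2%:R * t * area2 A B Cc = 2%:R * normsq (A + z ^+ 2 * B + z ^+ 4 * Cc).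
Proof.
have z4 : z ^+ 4 = - z by rewrite (_ : 4 = 3 + 1)%N // exprD z3 expr1 mulN1r.
rewrite !cdist2 z4 z2 /area2 /normsq.
rewrite !(ReD, ImD, ReN, ImN, ReM, ImM, Re1, Im1, Rez, Imz).
by field: Ht.
Qed.

Lemma adjP k p : adjacent R p (P k p).
Proof.
rewrite /adjacent /cdist embP.
have -> : (emb R p - (emb R p + z ^+ k)) = - z ^+ k by ring.
have := normsq_zX k; rewrite -normsqN /normsq => ->; exact: sqrtr1.
Qed.

Definition N3 (a b : int) := a * a + a * b + b * b.

Lemma adj_int p q : adjacent R p q -> N3 (q.1 - p.1) (q.2 - p.2) = 1.
Proof.
rewrite /adjacent => H.
have : cdist (emb R p) (emb R q) ^+ 2 = 1 by rewrite H expr1n.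
rewrite cdist2 /normsq ReD ImD ReN ImN !emb_re !emb_im => E.
have E2 : ((N3 (q.1 - p.1) (q.2 - p.2))%:~R : R) = 1.
  rewrite -[in RHS]E /N3 !rmorphD !rmorphM !rmorphB /=; by field: Ht.
by apply/eqP; rewrite -(eqr_int R) E2 rmorph1.
Qed.

Lemma area_int p q s : area2 (emb R p) (emb R q) (emb R s) =
  t / 2%:R * ((q.1 - p.1) * (s.2 - p.2) - (q.2 - p.2) * (s.1 - p.1))%:~R.
Proof.
rewrite /area2 !ReB !ImB !emb_re !emb_im !rmorphB !rmorphM !rmorphB /=.
by field.
Qed.

Lemma cls (a b c d : int) : N3 a b = 1 -> N3 c d = 1 -> N3 (c - a) (d - b) = 1 -> 0 < a * d - b * c ->
  exists k : nat, (a, b) = dir k /\ (c, d) = dir k.+1.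
Proof.
have bnd (x y : int) : N3 x y = 1 -> (x = -1 \/ x = 0 \/ x = 1) /\ (y = -1 \/ y = 0 \/ y = 1).
  rewrite /N3 => H; split; nia.
move=> H1 H2 H3 H4.
have B1 := bnd a b H1; have B2 := bnd c d H2; move: H1 H2 H3 H4.
case: B1 => [[->|[->|->]] [->|[->|->]]]; case: B2 => [[->|[->|->]] [->|[->|->]]];
  rewrite /N3 /=;
  first [ by exists 0%N | by exists 1%N | by exists 2%N | by exists 3%N | by exists 4%N | by exists 5%N | lia].
Qed.

Lemma classify p q s : grid_triangle R p q s -> exists k, q = P k p /\ s = P k.+1 p.
Proof.
case=> Hpq Hqs Hsp Har.
have A1 := @adj_int p q Hpq; have A2 := @adj_int q s Hqs; have A3 := @adj_int s p Hsp.
have A3' : N3 (s.1 - p.1) (s.2 - p.2) = 1 by rewrite -A3 /N3; ring.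
have A2' : N3 ((s.1 - p.1) - (q.1 - p.1)) ((s.2 - p.2) - (q.2 - p.2)) = 1
  by rewrite -A2 /N3; ring.
have Hd : 0 < (q.1 - p.1) * (s.2 - p.2) - (q.2 - p.2) * (s.1 - p.1).
  move: Har; rewrite area_int pmulr_rgt0 ?ltr0z //.
  by rewrite divr_gt0 ?t_gt0 ?ltr0n.
have [k [Hk1 Hk2]] := @cls _ _ _ _ A1 A3' A2' Hd.
exists k; split; rewrite /P -?Hk1 -?Hk2 /lat_add /=.
  by case: q {Hpq Hqs Har A1 A2 A2' Hd Hk1 Hk2} => a b /=; congr pair; ring.
by case: s {Hqs Hsp Har A2 A3 A3' A2' Hd Hk1 Hk2} => a b /=; congr pair; ring.
Qed.

Lemma int_const (g : int -> R) : (forall m, g (m + 1) = g m) -> forall m, g m = g 0.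
Proof.
move=> H m; case: m => n.
  elim: n => [//|n IH]; by rewrite -addn1 PoszD H.
rewrite NegzE; elim: n => [|n IH].
  by rewrite -(H (- 1%:Z)) addrC subrr.
by rewrite -(H (- n.+2%:Z)) -IH; congr g; rewrite -addn1 PoszD opprD -addrA subrr addr0.
Qed.

Lemma rot (phi : lat -> lat -> C) p q s :
  tri_quantity phi p q s = tri_quantity phi q s p.
Proof. rewrite /tri_quantity /area2 !ReB !ImB; ring. Qed.

Variable phi : lat -> lat -> C.
Hypothesis Hg : hex_grid phi.

Lemma hexN p : exists c r : C, forall k : nat, phi p (P k p) = c + r * z ^+ k.
Proof.
have [_ H] := Hg; have [c [r Hk]] := H p; exists c, r => k.
have := Hk (Ordinal (ltn_pmod k (isT : (0 < 6)%N))).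
by rewrite /= -dirmod -zmod.
Qed.

Lemma symm x y : adjacent R x y -> phi x y = phi y x.
Proof. by case: Hg => H _; apply: H. Qed.

Lemma TQa k p c r d s :
  (forall j, phi p (P j p) = c + r * z ^+ j) ->
  (forall j, phi (P k.+1 p) (P j (P k.+1 p)) = d + s * z ^+ j) ->
  tri_quantity phi p (P k p) (P k.+1 p) = 2%:R * normsq (r - s).
Proof.
move=> hp hw.
rewrite /tri_quantity Qform.
have eB : phi (P k p) (P k.+1 p) = d + s * z ^+ (k + 5).
  rewrite symm; last by rewrite -[P k.+1 p](L2 k p); exact: adjP.
  by have := hw (k + 5); rewrite L5.
have eC : phi (P k.+1 p) p = d + s * z ^+ (k + 4).
  by have := hw (k + 4); rewrite L4.
have eC' : phi (P k.+1 p) p = c + r * z ^+ k.+1.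
  by rewrite -symm ?hp //; exact: adjP.
have hd : d = c + r * z ^+ k.+1 - s * z ^+ (k + 4) by rewrite -eC' eC; ring.
rewrite hp eB eC hd.
set L := (X in normsq X).
have -> : L = z ^+ (k + 5) * (r - s) by rewrite /L !exprD !exprS; ring: (z2).
by rewrite normsqM normsq_zX mul1r.
Qed.


Lemma TQb k p c r d s :
  (forall j, phi p (P j p) = c + r * z ^+ j) ->
  (forall j, phi (P k.+1 p) (P j (P k.+1 p)) = d + s * z ^+ j) ->
  tri_quantity phi p (P k.+1 p) (P k.+2 p) = 2%:R * normsq (r - s).
Proof.
move=> hp hw.
rewrite /tri_quantity Qform.
have eB : phi (P k.+1 p) (P k.+2 p) = d + s * z ^+ (k + 3).
  by have := hw (k + 3); rewrite L3.
have eC : phi (P k.+2 p) p = c + r * z ^+ k.+2.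
  by rewrite -symm ?hp //; exact: adjP.
have eW : phi (P k.+1 p) p = d + s * z ^+ (k + 4).
  by have := hw (k + 4); rewrite L4.
have eW' : phi (P k.+1 p) p = c + r * z ^+ k.+1.
  by rewrite -symm ?hp //; exact: adjP.
have hd : d = c + r * z ^+ k.+1 - s * z ^+ (k + 4) by rewrite -eW' eW; ring.
rewrite hp eB eC hd.
set L := (X in normsq X).
have -> : L = z ^+ k.+1 * (r - s) by rewrite /L !exprD !exprS; ring: (z2).
by rewrite normsqM normsq_zX mul1r.
Qed.

Lemma step k p : tri_quantity phi p (P k p) (P k.+1 p) = tri_quantity phi p (P k.+1 p) (P k.+2 p).
Proof.
have [c [r hp]] := hexN p; have [d [s hw]] := hexN (P k.+1 p).
by rewrite (@TQa k p c r d s hp hw) (@TQb k p c r d s hp hw).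
Qed.

Definition V p := tri_quantity phi p (P 0 p) (P 1 p).

Lemma around k p : tri_quantity phi p (P k p) (P k.+1 p) = V p.
Proof. by elim: k => [//|k IH]; rewrite -step. Qed.

Lemma Vstep k p : V (P k p) = V p.
Proof.
by rewrite -(around k p) rot -(L2 k p) -{4}(L3' k p) around.
Qed.

Lemma Vconst p : V p = V (0, 0).
Proof.
case: p => a b.
have h1 : V (a, b) = V (0, b).
  apply: (int_const (fun m => V (m, b))) => m /=.
  by have := Vstep 0 (m, b); rewrite /P /lat_add /= addr0.
rewrite h1; apply: (int_const (fun m => V (0, m))) => m /=.
by have := Vstep 1 (0, m); rewrite /P /lat_add /= addr0.
Qed.

End S.

Theorem mainTheorem15 (R : rcfType) (phi : lat -> lat -> R[i]) :
  hex_grid phi ->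
  forall p q s p' q' s' : lat,
    grid_triangle R p q s -> grid_triangle R p' q' s' ->
    tri_quantity phi p q s = tri_quantity phi p' q' s'.
Proof.
move=> Hg p q s p' q' s' T1 T2.
have [k [-> ->]] := @classify R p q s T1; have [k' [-> ->]] := @classify R p' q' s' T2.
by rewrite !(@around R phi Hg) (@Vconst R phi Hg p) (@Vconst R phi Hg p').
Qed.
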